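(* Let $\mathcal A$ be a finite set, $\mathcal R\subset F(\mathcal A)$ finite, $\phi:F(\mathcal A)\to F(\mathcal A)$ a homomorphism, $G$ the group with presentation $\mathcal P=\langle t,\mathcal A:\mathcal R,\ t^{-1}at=\phi(a)\ (a\in\mathcal A)\rangle$, $X$ its Cayley 2-complex, and $\Lambda\subset X$ the Cayley graph of $A=\langle\mathcal A\rangle\le G$ with respect to $\mathcal A$ (containing the identity vertex). For each $\mathcal A$-edge $e$ of $X$ let $H_e:[0,1]\times[0,\infty)\to X$ be the strip map described in the context. If $C\subset X$ is compact, then there are only finitely many edges $e$ of $\Lambda$ such that the image of $H_e$ intersects $C$.
   Context: The Cayley 2-complex $X$ of $\mathcal P$ is the simply connected 2-complex whose 1-skeleton is the Cayley graph of $G$ with respect to $\mathcal A\cup\{t\}$ (vertex set $G$), with a 2-cell at each vertex for each relator. $\Lambda$ is the subgraph with vertex set $A$ and the $\mathcal A$-labeled edges between them. Strip map: let $e$ be an edge from $v$ to $w$ with label $a\in\mathcal A$. For each integer $k\ge0$, the edge path at $vt^k$ reading the word $\phi^k(a)$ ends at $wt^k$; the conjugation 2-cells (with boundaries $b\,t\,\phi(b)^{-1}t^{-1}$, $b\in\mathcal A^{\pm1}$) attached along the edges of this path form a strip whose boundary consists of the path labeled $\phi^k(a)$ at $vt^k$, the $t$-edge from $vt^k$ to $vt^{k+1}$, the path labeled $\phi^{k+1}(a)$ at $vt^{k+1}$, and the $t$-edge from $wt^k$ to $wt^{k+1}$. $H_e$ maps $[0,1]\times[k,k+1]$ onto this strip,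 with $[0,1]\times\{k\}$ going to the path labeled $\phi^k(a)$ and $\{0\}\times[k,k+1]$, $\{1\}\times[k,k+1]$ going to the $t$-edges at $vt^k$, $wt^k$. In particular $H_e(x,0)=e(x)$ and $H_e(0,\cdot)$, $H_e(1,\cdot)$ are the edge path rays at $v$, $w$ all of whose edges are labeled $t$. *)

(* Defs.v *)
From HB Require Import structures.
From mathcomp Require Import all_boot all_order all_algebra.
From mathcomp Require Import all_classical all_reals all_analysis.
From Stdlib Require List.
Set Implicit Arguments. Unset Strict Implicit. Unset Printing Implicit Defensive.
Import Order.TTheory GRing.Theory Num.Theory numFieldNormedType.Exports.
Local Open Scope classical_set_scope.
Local Open Scope ring_scope.

Section Words.
Variable T : eqType.
(* a letter (x, b): x^(+1) if b = false, x^(-1) if b = true *)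
Definition linv (l : T * bool) : T * bool := (l.1, ~~ l.2).
Definition winv (w : seq (T * bool)) := rev (map linv w).
Definition reduce (w : seq (T * bool)) : seq (T * bool) :=
  foldr (fun x acc => match acc with
                      | y :: acc' => if y == linv x then acc' else x :: acc
                      | [::] => [:: x] end) [::] w.
End Words.

Section Cayley.
(* 𝒜 : finite generating set; Rs : the finite set R ⊂ F(𝒜) (as words);
   phi a : a word representing φ(a) ∈ F(𝒜) (φ is the homomorphism
   determined by these images). The letter None stands for t. *)
Variables (A : finType) (Rs : seq (seq (A * bool))) (phi : A -> seq (A * bool)).

Definition letter := (option A * bool)%type.
Definition word := seq letter.
Definition liftw (w : seq (A * bool)) : word := map (fun l => (Some l.1, l.2)) w.

Definition phiA (b : A) : seq (A * bool) := reduce (phi b).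
Definition phiF (w : seq (A * bool)) : seq (A * bool) :=
  reduce (flatten (map (fun l => if l.2 then winv (phiA l.1) else phiA l.1) w)).
Definition phi_iter (k : nat) (a : A) : seq (A * bool) := iter k phiF [:: (a, false)].

Definition conjrel (b : A) : word :=
  [:: (Some b, false); (None, false)] ++ winv (liftw (phiA b)) ++ [:: (None, true)].
Definition relidx := ('I_(size Rs) + A)%type.
Definition relw (i : relidx) : word :=
  match i with
  | inl j => liftw (reduce (nth [::] Rs j))
  | inr b => conjrel b
  end.

Inductive geq : word -> word -> Prop :=
| geq_refl w : geq w w
| geq_sym w1 w2 : geq w1 w2 -> geq w2 w1
| geq_trans w1 w2 w3 : geq w1 w2 -> geq w2 w3 -> geq w1 w3
| geq_cancel u v x : geq (u ++ x :: linv x :: v) (u ++ v)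
| geq_rel u v i : geq (u ++ relw i ++ v) (u ++ v).

Definition G := {S : set word | exists w, S = geq w}.
Definition cls (w : word) : G := exist _ (geq w) (ex_intro _ w erefl).
Definition rep (g : G) : word := projT1 (cid (proj2_sig g)).
Definition gmul (g : G) (w : word) : G := cls (rep g ++ w).

Definition inA (g : G) : Prop := exists w : seq (A * bool), g = cls (liftw w).

Variable R : realType.

Definition open01 := {s : R | 0 < s < 1}.
Definition odisk := {z : R * R | z.1 ^+ 2 + z.2 ^+ 2 < 1}.

(* points of X: vertices g ∈ G; interior points of the edge from g to g x
   (x ∈ 𝒜 ∪ {t}); interior points of the 2-cell at g for relator i *)
Inductive X :=
| XV of G
| XE of G & option A & open01
| XC of G & relidx & odisk.

Definition edgechar (g : G) (x : option A) (s : R) : X :=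
  match insub s : option open01 with
  | Some s' => XE g x s'
  | None => if s <= 0 then XV g else XV (gmul g [:: (x, false)])
  end.

Definition letterpt (g : G) (l : letter) (u : R) : X :=
  if l.2 then edgechar (gmul g [:: l]) l.1 (1 - u) else edgechar g l.1 u.

Definition pathpt (g : G) (r : word) (s : R) : X :=
  let n := size r in
  if n is 0 then XV g else
  let j := minn `|Num.floor (s * n%:R)|%N n.-1 in
  letterpt (gmul g (take j r)) (nth (None, false) r j) (s * n%:R - j%:R).

(* characteristic map of the 2-cell (g, i), on the square [0,1]^2
   (polar coordinates (s, rho): angle 2 pi s, radius rho; rho = 1 is the
   boundary, attached along the loop reading relw i at g) *)
Definition cellchar (g : G) (i : relidx) (p : R * R) : X :=
  let s := p.1 in let rho := p.2 in
  if 1 <= rho then pathpt g (relw i) s else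
  match insub (rho * cos (2 * pi * s), rho * sin (2 * pi * s)) : option odisk with
  | Some z => XC g i z
  | None => XV g
  end.

Definition I01 : set R := [set s | 0 <= s <= 1].
Definition I01sq : set (R * R) := [set p | 0 <= p.1 <= 1 /\ 0 <= p.2 <= 1].

Definition rel_open {T : topologicalType} (D P : set T) : Prop :=
  exists V : set T, open V /\ P `&` D = V `&` D.

(* CW (weak) topology on X *)
Definition openX (U : set X) : Prop :=
  (forall g x, @rel_open R I01 [set s | U (edgechar g x s)]) /\
  (forall g i, @rel_open (R * R)%type I01sq [set p | U (cellchar g i p)]).

Definition compactX (C : set X) : Prop :=
  forall F : set (set X), (forall U, F U -> openX U) ->
    C `<=` \bigcup_(U in F) U ->
    exists s : seq (set X), (forall U, List.In U s -> F U) /\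
      C `<=` [set x | exists U, List.In U s /\ U x].

Definition edge_img (g : G) (x : option A) : set X := edgechar g x @` I01.
Definition cell_img (g : G) (i : relidx) : set X := cellchar g i @` I01sq.

Definition conjcell (u : G) (l : A * bool) : set X :=
  if l.2 then cell_img (gmul u [:: (Some l.1, true)]) (inr l.1)
  else cell_img u (inr l.1).

Definition tpow (k : nat) : word := nseq k (None, false).

(* image of H_e on [0,1] x [k, k+1], e the edge from v labeled a *)
Definition strip (v : G) (a : A) (k : nat) : set X :=
  let w := gmul v [:: (Some a, false)] in
  let p := phi_iter k a in
  let u := gmul v (tpow k) in
  edge_img u None `|` edge_img (gmul w (tpow k)) None `|`
  [set y | exists2 j : nat, (j < size p)%N &
            conjcell (gmul u (liftw (take j p))) (nth (a, false) p j) y].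

Definition Himg (v : G) (a : A) : set X := \bigcup_(k in [set: nat]) strip v a k.

End Cayley.

(* Main.v *)
Require Import Defs.
From HB Require Import structures.
From mathcomp Require Import all_boot all_order all_algebra.
From mathcomp Require Import all_classical all_reals all_analysis.
From mathcomp Require Import ring lra zify.
Set Implicit Arguments. Unset Strict Implicit. Unset Printing Implicit Defensive.
Import Order.TTheory GRing.Theory Num.Theory numFieldNormedType.Exports.
Local Open Scope classical_set_scope.

Notation GEQ := Defs.geq.


Lemma geq_catr (A : finType) (Rs : seq (seq (A * bool))) (phi : A -> seq (A * bool)) (w1 w2 v : word A) :
  GEQ Rs phi w1 w2 -> GEQ Rs phi (w1 ++ v) (w2 ++ v).
Proof.
elim=> {w1 w2} [w|w1 w2 _ IH|w1 w2 w3 _ IH1 _ IH2|u v' x|u v' i].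
- exact: geq_refl.
- exact: geq_sym.
- exact: geq_trans IH1 IH2.
- by rewrite -!catA /=; apply: geq_cancel.
- by rewrite -!catA; apply: geq_rel.
Qed.

Lemma geq_inv (A : finType) (Rs : seq (seq (A * bool))) (phi : A -> seq (A * bool)) (x u v : word A) :
  GEQ Rs phi (u ++ x ++ winv x ++ v) (u ++ v).
Proof.
elim: x u v => [|l x IH] u v /=; first exact: geq_refl.
rewrite /winv /= rev_cons -/(winv x) -cats1.
have -> : u ++ l :: x ++ (winv x ++ [:: linv l]) ++ v
   = (rcons u l) ++ x ++ winv x ++ (linv l :: v).
  by rewrite -!cats1 -!catA.
apply: geq_trans (IH _ _) _.
rewrite -cats1 -catA /=; exact: geq_cancel.
Qed.

Lemma cls_eq (A : finType) (Rs : seq (seq (A * bool))) (phi : A -> seq (A * bool)) (w1 w2 : word A) :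
  GEQ Rs phi w1 w2 -> cls Rs phi w1 = cls Rs phi w2.
Proof.
move=> H; rewrite /cls; apply: eq_exist; apply/funext => w; apply/propext; split => H'.
- exact: geq_trans (geq_sym H) H'.
- exact: geq_trans H H'.
Qed.

Lemma rep_cls (A : finType) (Rs : seq (seq (A * bool))) (phi : A -> seq (A * bool)) (w : word A) : GEQ Rs phi (rep (cls Rs phi w)) w.
Proof.
rewrite /rep; case: (boolp.constructive_indefinite_description _) => w' /= H.
have : GEQ Rs phi w w' by rewrite H; exact: geq_refl.
exact: geq_sym.
Qed.

Lemma cls_rep (A : finType) (Rs : seq (seq (A * bool))) (phi : A -> seq (A * bool)) (g : G Rs phi) : cls Rs phi (rep g) = g.
Proof.
case: g => S HS; rewrite /rep /=; case: (boolp.constructive_indefinite_description _) => w' /= H.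
by rewrite /cls; apply: eq_exist; rewrite H.
Qed.

Lemma gmulA (A : finType) (Rs : seq (seq (A * bool))) (phi : A -> seq (A * bool)) (v : G Rs phi) (x y : word A) :
  gmul (gmul v x) y = gmul v (x ++ y).
Proof. by rewrite /gmul catA; apply: cls_eq; apply: geq_catr; apply: rep_cls. Qed.

Lemma gmul0 (A : finType) (Rs : seq (seq (A * bool))) (phi : A -> seq (A * bool)) (v : G Rs phi) : gmul v [::] = v.
Proof. by rewrite /gmul cats0 cls_rep. Qed.

Lemma gmulK (A : finType) (Rs : seq (seq (A * bool))) (phi : A -> seq (A * bool)) (v : G Rs phi) (x : word A) :
  gmul (gmul v x) (winv x) = v.
Proof.
rewrite gmulA /gmul -{2}(cls_rep v); apply: cls_eq.
have := geq_inv Rs phi x (rep v) [::]; by rewrite !cats0.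
Qed.

Local Open Scope ring_scope.
Definition tl (A : finType) (l : letter A) : int :=
  if l.1 is None then (if l.2 then -1 else 1) else 0.
Definition texp (A : finType) (w : word A) : int := foldr (fun l acc => tl l + acc) 0 w.

Lemma texp_cat (A : finType) (w1 w2 : word A) : texp (w1 ++ w2) = texp w1 + texp w2.
Proof. by elim: w1 => [|l w IH] /=; rewrite ?add0r // IH addrA. Qed.

Lemma texp0 (A : finType) (w : word A) : (forall l, l \in w -> tl l = 0) -> texp w = 0.
Proof.
elim: w => [|l w IH] //= H; rewrite H ?mem_head // add0r IH // => l' Hl'.
by apply: H; rewrite in_cons Hl' orbT.
Qed.

Lemma texp_liftw (A : finType) (w : seq (A * bool)) : texp (liftw w) = 0.
Proof. by apply: texp0 => l /mapP [l' _ ->]. Qed.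

Lemma texp_winv_liftw (A : finType) (w : seq (A * bool)) : texp (winv (liftw w)) = 0.
Proof.
apply: texp0 => l; rewrite /winv mem_rev => /mapP [l' /mapP [l'' _ ->] ->] //.
Qed.

Lemma texp_relw (A : finType) (Rs : seq (seq (A * bool))) (phi : A -> seq (A * bool)) (i : relidx Rs) : texp (relw phi i) = 0.
Proof.
case: i => [j|b] /=; first exact: texp_liftw.
rewrite /conjrel /= texp_cat texp_winv_liftw /=.
by [].
Qed.

Lemma texp_geq (A : finType) (Rs : seq (seq (A * bool))) (phi : A -> seq (A * bool)) (w1 w2 : word A) :
  GEQ Rs phi w1 w2 -> texp w1 = texp w2.
Proof.
elim=> {w1 w2} [w|w1 w2 _ IH|w1 w2 w3 _ IH1 _ IH2|u v' x|u v' i].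
- by [].
- by rewrite IH.
- by rewrite IH1 IH2.
- rewrite !texp_cat /=; congr (_ + _).
  have H0 : tl x + tl (linv x) = 0 by case: x => [[b|] []].
  by rewrite addrA H0 add0r.
- by rewrite !texp_cat texp_relw add0r.
Qed.

Definition texpG (A : finType) (Rs : seq (seq (A * bool))) (phi : A -> seq (A * bool)) (g : G Rs phi) : int := texp (A:=A) (rep g).

Lemma texpG_gmul (A : finType) (Rs : seq (seq (A * bool))) (phi : A -> seq (A * bool)) (v : G Rs phi) (x : word A) :
  texpG (gmul v x) = texpG v + texp x.
Proof. by rewrite /texpG /gmul (texp_geq (rep_cls _ _ _)) texp_cat. Qed.

Lemma texpG_A (A : finType) (Rs : seq (seq (A * bool))) (phi : A -> seq (A * bool)) (v : G Rs phi) : inA v -> texpG v = 0.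
Proof. by case=> w ->; rewrite /texpG (texp_geq (rep_cls _ _ _)) texp_liftw. Qed.
Definition base (A : finType) (Rs : seq (seq (A * bool))) (phi : A -> seq (A * bool)) (R : realType)
  (y : X Rs phi R) : G Rs phi :=
  match y with XV g => g | XE g _ _ => g | XC g _ _ => g end.


Lemma edgechar_base (A : finType) (Rs : seq (seq (A * bool))) (phi : A -> seq (A * bool)) (R : realType)
  (g : G Rs phi) (x : option A) (s : R) :
  exists2 m, (m <= 1)%N & base (edgechar g x s) = gmul g (take m [:: (x, false)]).
Proof.
rewrite /edgechar; case: insubP => [s' _ _|_]; first by exists 0%N => //=; rewrite gmul0.
by case: ifP => _; [exists 0%N => //=; rewrite gmul0 | exists 1%N].
Qed.

Lemma letterpt_base (A : finType) (Rs : seq (seq (A * bool))) (phi : A -> seq (A * bool)) (R : realType)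
  (g : G Rs phi) (l : letter A) (u : R) :
  exists2 m, (m <= 1)%N & base (letterpt g l u) = gmul g (take m [:: l]).
Proof.
case: l => x [] /=; rewrite /letterpt /=.
- have [m Hm ->] := edgechar_base (gmul g [:: (x, true)]) x (1 - u).
  case: m Hm => [|[|]] // _; first by exists 1%N => //=; rewrite gmul0.
  exists 0%N => //=; rewrite gmul0.
  have := gmulK g [:: (x, true)]; by rewrite /winv /=.
- have [m Hm ->] := edgechar_base g x u; by exists m.
Qed.

Lemma pathpt_base (A : finType) (Rs : seq (seq (A * bool))) (phi : A -> seq (A * bool)) (R : realType)
  (g : G Rs phi) (r : word A) (s : R) :
  exists2 m, (m <= size r)%N & base (pathpt g r s) = gmul g (take m r).
Proof.
rewrite /pathpt; case E: (size r) => [|n]; first by exists 0%N => //=; rewrite take0 gmul0.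
set j := minn _ _.
have Hj : (j < size r)%N by rewrite E ltnS /j geq_minr.
have [m Hm ->] := letterpt_base (gmul g (take j r)) (nth (None, false) r j) (s * n.+1%:R - j%:R)%R.
rewrite gmulA; case: m Hm => [|[|]] // _.
- by exists j => //=; [rewrite -E ltnW | rewrite cats0].
- exists j.+1; first by rewrite -E.
  by rewrite /= (take_nth (None, false) Hj) -cats1.
Qed.

Lemma cellchar_base (A : finType) (Rs : seq (seq (A * bool))) (phi : A -> seq (A * bool)) (R : realType)
  (g : G Rs phi) (i : relidx Rs) (p : R * R) :
  exists2 m, (m <= size (relw phi i))%N & base (cellchar g i p) = gmul g (take m (relw phi i)).
Proof.
rewrite /cellchar; case: ifP => _; first exact: pathpt_base.
by case: insubP => [z _ _|_]; exists 0%N => //=; rewrite take0 gmul0.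
Qed.

Definition cellW (A : finType) (phi : A -> seq (A * bool)) (x0 : word A) (l : A * bool) : seq (word A) :=
  let x1 := if l.2 then x0 ++ [:: (Some l.1, true)] else x0 in
  [seq x1 ++ take m (conjrel phi l.1) | m <- iota 0 (size (conjrel phi l.1)).+1].

Definition Wl (A : finType) (phi : A -> seq (A * bool)) (k : nat) (a : A) : seq (word A) :=
  let p := phi_iter phi k a in
  [seq tpow A k ++ take m [:: (None, false)] | m <- iota 0 2] ++
  [seq ([:: (Some a, false)] ++ tpow A k) ++ take m [:: (None, false)] | m <- iota 0 2] ++
  flatten [seq cellW phi (tpow A k ++ liftw (take j p)) (nth (a, false) p j) | j <- iota 0 (size p)].

Local Open Scope ring_scope.

Lemma texp_tpow (A : finType) k : texp (tpow A k) = k%:Z.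
Proof. by elim: k => [|k IH] //=; rewrite IH /tl /= addrC -[in RHS]addn1 PoszD. Qed.

Lemma texp_ge (A : finType) (w : word A) : - (count (pred1 (None, true)) w)%:Z <= texp w.
Proof.
elim: w => [|l w IH] //=; case: l => [[b|] []] /=; rewrite /tl /= ?add0r ?add0n //.
- by rewrite PoszD opprD; apply: lerD.
- by apply: le_trans IH _; lia.
Qed.

Lemma texp_take_ge (A : finType) (w : word A) m : - (count (pred1 (None, true)) w)%:Z <= texp (take m w).
Proof.
apply: le_trans (texp_ge _); rewrite lerN2 lez_nat.
by rewrite -{2}(cat_take_drop m w) count_cat leq_addr.
Qed.

Lemma count_conjrel (A : finType) (phi : A -> seq (A * bool)) b :
  count (pred1 (None, true)) (conjrel phi b) = 1%N.
Proof.
rewrite /conjrel /= count_cat /= addn0 add0n.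
suff -> : count (pred1 (None, true)) (winv (liftw (phiA phi b))) = 0%N by [].
apply/count_memPn; rewrite /winv mem_rev; apply/mapP => [[l /mapP [l' _ ->]]] //.
Qed.
Local Open Scope ring_scope.
Lemma strip_base (A : finType) (Rs : seq (seq (A * bool))) (phi : A -> seq (A * bool)) (R : realType)
  (v : G Rs phi) (a : A) (k : nat) (y : X Rs phi R) :
  strip v a k y -> exists x, [/\ x \in Wl phi k a, (k%:Z - 1 <= texp x) & base y = gmul v x].
Proof.
rewrite /strip => -[[[s _ <-]|[s _ <-]]|[j Hj H]].
- have [m Hm ->] := edgechar_base (gmul v (tpow A k)) None s.
  exists (tpow A k ++ take m [:: (None, false)]); split.
  + by rewrite /Wl mem_cat; apply/orP; left; apply/mapP; exists m => //; rewrite mem_iota /= ltnS.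
  + by rewrite texp_cat texp_tpow; case: m Hm => [|[|]] //= _; rewrite /tl /=; lia.
  + by rewrite gmulA.
- have [m Hm ->] := edgechar_base (gmul (gmul v [:: (Some a, false)]) (tpow A k)) None s.
  exists (([:: (Some a, false)] ++ tpow A k) ++ take m [:: (None, false)]); split.
  + rewrite /Wl !mem_cat; apply/orP; right; apply/orP; left.
    by apply/mapP; exists m => //; rewrite mem_iota /= ltnS.
  + by rewrite !texp_cat texp_tpow; case: m Hm => [|[|]] //= _; rewrite /tl /=; lia.
  + by rewrite !gmulA !catA.
- move: H; rewrite /conjcell.
  case El: (nth (a, false) (phi_iter phi k a) j) => [b bb].
  have Hmem : forall x1, x1 \in cellW phi (tpow A k ++ liftw (take j (phi_iter phi k a))) (b, bb) ->
      x1 \in Wl phi k a.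
    move=> x1 Hx1; rewrite /Wl !mem_cat; apply/orP; right; apply/orP; right.
    by apply/flatten_mapP; exists j; [rewrite mem_iota | rewrite El].
  have Hc := texp_take_ge (conjrel phi b); rewrite count_conjrel in Hc.
  case: bb El Hmem => El Hmem /= [q _ <-].
  + have [m Hm ->] := cellchar_base (gmul (gmul (gmul v (tpow A k)) (liftw (take j (phi_iter phi k a))))
                                     [:: (Some b, true)]) (inr b) q.
    exists (((tpow A k ++ liftw (take j (phi_iter phi k a))) ++ [:: (Some b, true)]) ++ take m (conjrel phi b)); split.
    * by apply: Hmem; rewrite /cellW; apply/mapP; exists m => //; rewrite mem_iota.
    * rewrite !texp_cat texp_tpow texp_liftw /=; have := Hc m; rewrite /tl /=; lia.
    * by rewrite !gmulA !catA.
  + have [m Hm ->] := cellchar_base (gmul (gmul v (tpow A k)) (liftw (take j (phi_iter phi k a))))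
                                     (inr b) q.
    exists ((tpow A k ++ liftw (take j (phi_iter phi k a))) ++ take m (conjrel phi b)); split.
    * by apply: Hmem; rewrite /cellW; apply/mapP; exists m => //; rewrite mem_iota.
    * rewrite !texp_cat texp_tpow texp_liftw /=; have := Hc m; lia.
    * by rewrite !gmulA !catA.
Qed.

Lemma Eg_finite (A : finType) (Rs : seq (seq (A * bool))) (phi : A -> seq (A * bool)) (R : realType)
  (g : G Rs phi) :
  finite_set [set e : G Rs phi * A | inA e.1 /\ exists2 y : X Rs phi R, Himg e.1 e.2 y & base y = g].
Proof.
pose N := `|texpG g|%N.
pose KA := [seq (k, a) | k <- iota 0 N.+2, a <- enum A].
pose Lw := [seq (ka, x) | ka <- KA, x <- Wl phi ka.1 ka.2].
apply: (sub_finite_set (B := (fun t => (gmul g (winv t.2), t.1.2)) @` [set` Lw])); last first.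
  exact/finite_image/finite_seq.
move=> [v a] /= [HA [y [k _ Hy] Hb]].
have [x [Hx Ht Hbx]] := strip_base Hy.
have Hg : texpG g = texp x by rewrite -Hb Hbx texpG_gmul texpG_A // add0r.
exists ((k, a), x) => /=.
- rewrite /Lw; apply: (allpairs_f_dep (fun ka (x : word A) => (ka, x))) => //.
  rewrite /KA; apply: allpairs_f; last by rewrite mem_enum.
  rewrite mem_iota /= /N; move: Ht; rewrite -Hg; lia.
- by rewrite -Hb Hbx gmulK.
Qed.
Lemma closed_subfin (T : topologicalType) (hT : hausdorff_space T) (S F : set T) :
  S `<=` F -> finite_set F -> closed S.
Proof.
move=> SF fF; apply: (accessible_finite_set_closed.1 (hausdorff_accessible hT)).
exact: sub_finite_set SF fF.
Qed.

Lemma subsing_finite (T : Type) (S : set T) :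
  (forall a b, S a -> S b -> a = b) -> finite_set S.
Proof.
move=> H; have [[a Ha]|N] := pselect (exists a, S a).
- have -> : S = [set a] by apply/seteqP; split => x; [move=> Hx; exact: H _ _ Hx Ha | move=> ->].
  exact: finite_set1.
- have -> : S = set0 by apply/seteqP; split => x // Hx; apply: N; exists x.
  exact: finite_set0.
Qed.

Lemma pair_cont (R : realType) (f g : R * R -> R) :
  continuous f -> continuous g -> continuous (fun p => (f p, g p)).
Proof.
move=> hf hg p; apply: (@cvg_pair _ _ _ (nbhs p) (nbhs (f p)) (nbhs (g p))).
- exact: hf.
- exact: hg.
Qed.

Lemma polar_cont (R : realType) :
  continuous (fun p : R * R => (p.2 * cos (2 * pi * p.1), p.2 * sin (2 * pi * p.1))).
Proof.
have h1 : continuous (fun p : R * R => p.1) by move=> p; exact: cvg_fst.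
have h2 : continuous (fun p : R * R => p.2) by move=> p; exact: cvg_snd.
have h3 : continuous (fun p : R * R => 2 * pi * p.1).
  by move=> p; apply: cvgMl_tmp; exact: h1.
apply: pair_cont => p; apply: continuousM; (try exact: h2).
- apply: (continuous_comp (f := fun q : R * R => 2 * pi * q.1)); [exact: h3 | exact: continuous_cos].
- apply: (continuous_comp (f := fun q : R * R => 2 * pi * q.1)); [exact: h3 | exact: continuous_sin].
Qed.
Lemma letterpt_open (A : finType) (Rs : seq (seq (A * bool))) (phi : A -> seq (A * bool)) (R : realType)
  (h : G Rs phi) (l : letter A) (u : R) : 0 < u < 1 ->
  exists s' : open01 R, letterpt h l u = XE (if l.2 then gmul h [:: l] else h) l.1 s' /\
     val s' = (if l.2 then 1 - u else u).
Proof.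
move=> /andP [Hu0 Hu1]; case: l => x [] /=; rewrite /letterpt /edgechar /=.
- case: insubP => [s' _ Hv|Hn]; first by exists s'.
  by exfalso; move/negP: Hn; apply; apply/andP; split; lra.
- case: insubP => [s' _ Hv|Hn]; first by exists s'.
  by exfalso; move/negP: Hn; apply; apply/andP; split; lra.
Qed.

Lemma pathpt_dec (A : finType) (Rs : seq (seq (A * bool))) (phi : A -> seq (A * bool)) (R : realType)
  (g : G Rs phi) (r : word A) (n : nat) (s : R) :
  size r = n.+1 -> 0 <= s <= 1 ->
  exists j, exists u : R, [/\ (j <= n)%N, 0 <= u <= 1, s = (j%:R + u) / n.+1%:R &
     pathpt g r s = letterpt (gmul g (take j r)) (nth (None, false) r j) u].
Proof.
move=> E /andP [Hs0 Hs1]; rewrite /pathpt E /=.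
set t := s * n.+1%:R.
have Hn : (0 : R) < n.+1%:R by rewrite ltr0n.
have Ht0 : 0 <= t by rewrite /t mulr_ge0 // ltW.
have Ht1 : t <= n.+1%:R by rewrite /t -{2}(mul1r n.+1%:R) ler_wpM2r // ltW.
set f := Num.floor t.
have Hf0 : 0 <= f by rewrite /f floor_ge0.
have Hfj : (`|f|%N)%:R = f%:~R :> R by rewrite natr_absz ger0_norm.
have [Hfl Hfr] := andP (floor_itv t).
exists (minn `|f|%N n), (t - (minn `|f|%N n)%:R); split => //.
- exact: geq_minr.
- case: (leqP `|f|%N n) => H.
  + rewrite Hfj; apply/andP; split; first by rewrite subr_ge0.
    by rewrite lerBlDl -intrD1 ltW // addrC.
  +
    have : n.+1%:R <= f%:~R :> R by rewrite -Hfj ler_nat.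
    move=> Hf; apply/andP; split; rewrite -/t.
    * have : t = n.+1%:R by apply: le_anti; rewrite Ht1 /=; apply: le_trans Hf Hfl.
      move=> ->; rewrite mulrSr; lra.
    * have : t = n.+1%:R by apply: le_anti; rewrite Ht1 /=; apply: le_trans Hf Hfl.
      move=> ->; rewrite mulrSr; lra.
- by rewrite addrC subrK /t mulfK // gt_eqF.
Qed.
Definition binj (A : finType) (Rs : seq (seq (A * bool))) (phi : A -> seq (A * bool)) (R : realType)
  (Q : set (X Rs phi R)) := forall p q, Q p -> Q q -> base p = base q -> p = q.

Lemma pathpt_fin (A : finType) (Rs : seq (seq (A * bool))) (phi : A -> seq (A * bool)) (R : realType)
  (Q : set (X Rs phi R)) (HQ : binj Q) (g : G Rs phi) (r : word A) (n : nat) :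
  size r = n.+1 -> finite_set [set s : R | (0 <= s <= 1) /\ Q (pathpt g r s)].
Proof.
move=> E.
pose h j := gmul g (take j r). pose l j := nth (None, false) r j.
apply: (sub_finite_set (B := \bigcup_(j in `I_n.+1) (fun u : R => (j%:R + u) / n.+1%:R) @`
   ([set 0; 1] `|` [set u | (0 < u < 1) /\ Q (letterpt (h j) (l j) u)]))).
- move=> s [Hs Hq]; have [j [u [Hj Hu Hsu Hp]]] := pathpt_dec g E Hs.
  exists j; first by rewrite /= ltnS.
  exists u; last by rewrite Hsu.
  case: (boolP (0 < u < 1)) => Hu'.
  + by right; split => //; rewrite -Hp.
  + left; move/andP: Hu => [Hu0 Hu1]; rewrite negb_and -!leNgt in Hu'.
    case/orP: Hu' => H; [left; apply: le_anti; rewrite H Hu0 // | right; apply: le_anti; rewrite H Hu1 //].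
- apply: bigcup_finite; first exact: finite_II.
  move=> j _; apply: finite_image; rewrite finite_setU; split; first exact: finite_set2.
  apply: subsing_finite => u1 u2 [H1 Q1] [H2 Q2].
  have [s1 [E1 V1]] := letterpt_open (h j) (l j) H1.
  have [s2 [E2 V2]] := letterpt_open (h j) (l j) H2.
  rewrite E1 in Q1; rewrite E2 in Q2.
  have := HQ _ _ Q1 Q2 erefl; case=> Es.
  have : (if (l j).2 then 1 - u1 else u1) = (if (l j).2 then 1 - u2 else u2) by rewrite -V1 -V2 Es.
  by case: ifP => _ Hx; lra.
Qed.
Lemma polar_norm (R : realType) (p : R * R) :
  (p.2 * cos (2 * pi * p.1)) ^+ 2 + (p.2 * sin (2 * pi * p.1)) ^+ 2 = p.2 ^+ 2.
Proof. by rewrite !exprMn -mulrDr cos2Dsin2 mulr1. Qed.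

Lemma openX_edge (A : finType) (Rs : seq (seq (A * bool))) (phi : A -> seq (A * bool)) (R : realType)
  (Q : set (X Rs phi R)) (HQ : binj Q) (g : G Rs phi) (x : option A) :
  rel_open (@I01 R) [set s | (~` Q) (edgechar g x s)].
Proof.
pose K := [set s | @I01 R s /\ Q (edgechar g x s)].
exists (~` K); split.
- apply: closed_openC.
  apply: (closed_subfin (@Rhausdorff R) (F := [set 0; 1] `|` [set val s0 | s0 in [set s0 | Q (XE g x s0)]])).
  + move=> s [/andP [H0 H1] Hq]; move: Hq; rewrite /edgechar; case: insubP => [s' _ Hv|Hn].
    * by move=> Hq; right; exists s'.
    * move: Hn; rewrite negb_and -!leNgt => Hn.
      case: ifP => Hs Hq; left; [left; apply: le_anti; rewrite Hs H0 // | right].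
      case/orP: Hn => Hn; last by apply: le_anti; rewrite Hn H1.
      by move: Hs; rewrite Hn.
  + rewrite finite_setU; split; first exact: finite_set2.
    apply: finite_image; apply: subsing_finite => a b Ha Hb.
    by have := HQ _ _ Ha Hb erefl; case.
- apply/seteqP; split => s [Hn HI]; split => //.
  + by move=> [_ Hq]; exact: Hn Hq.
  + by move=> Hq; apply: Hn.
Qed.

Lemma openX_cell (A : finType) (Rs : seq (seq (A * bool))) (phi : A -> seq (A * bool)) (R : realType)
  (Q : set (X Rs phi R)) (HQ : binj Q) (g : G Rs phi) (i : relidx Rs) :
  rel_open (@I01sq R) [set p | (~` Q) (cellchar g i p)].
Proof.
pose f := fun p : R * R => (p.2 * cos (2 * pi * p.1), p.2 * sin (2 * pi * p.1)).
pose K2 := f @^-1` [set val z | z in [set z | Q (XC g i z)]].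
pose K1 := if size (relw phi i) is 0 then [set p : R * R | 1 <= p.2 /\ Q (XV R g)]
           else [set p | @I01sq R p /\ 1 <= p.2 /\ Q (cellchar g i p)].
have cellK1 : forall p, @I01sq R p -> 1 <= p.2 -> Q (cellchar g i p) <-> K1 p.
  move=> p HI Hp.
  have Hc : cellchar g i p = pathpt g (relw phi i) p.1 by rewrite /cellchar Hp.
  rewrite /K1; case E: (size (relw phi i)) => [|n] /=.
  + have -> : cellchar g i p = XV R g by rewrite Hc /pathpt E.
    by split => [H|[_ H]] //; split.
  + by split => [H|[_ [_ H]]] //; split => //; split.
exists (~` (K1 `|` K2)); split.
- apply: closed_openC; apply: closedU.
  + rewrite /K1; case E: (size (relw phi i)) => [|n].
    * have [Hq|Hq] := pselect (Q (XV R g)).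
      -- have -> : [set p : R * R | 1 <= p.2 /\ Q (XV R g)] = (fun p : R * R => p.2) @^-1` [set x | 1 <= x].
           by apply/seteqP; split => p /=; [case | ].
         apply: preimage_closed; last exact: closed_ge.
         by move=> p _; exact: cvg_snd.
      -- have -> : [set p : R * R | 1 <= p.2 /\ Q (XV R g)] = set0.
           by apply/seteqP; split => p //= [].
         exact: closed0.
    * apply: (closed_subfin (@norm_hausdorff R (R * R)%type)
               (F := (fun s => (s, 1)) @` [set s : R | (0 <= s <= 1) /\ Q (pathpt g (relw phi i) s)])).
      -- move=> p [[/andP [H10 H11] /andP [H20 H21]] [H2 Hq]].
         exists p.1; last by move: H21 H2; case: p {H10 H11 H20 Hq} => a b /= H21 H2; congr pair; apply: le_anti; rewrite H21 H2.
         by split; [rewrite H10 H11 | move: Hq; rewrite /cellchar H2].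
      -- apply: finite_image; exact: (pathpt_fin HQ g E).
  + apply: preimage_closed; first by move=> p _; exact: polar_cont.
    apply: (closed_subfin (@norm_hausdorff R (R * R)%type) (F := [set val z | z in [set z | Q (XC g i z)]])) => //.
    apply: finite_image; apply: subsing_finite => a b Ha Hb.
    by have := HQ _ _ Ha Hb erefl; case.
- apply/seteqP; split => p [Hn HI]; split => //.
  + move=> [H1|[z Hz Hfz]]; apply: Hn.
    * have Hp : 1 <= p.2.
        by move: H1; rewrite /K1; case: (size (relw phi i)) => [|n]; [case | case=> _ []].
      by apply/(cellK1 p HI Hp).
    * have Hp2 : p.2 < 1.
        case: HI => _ /andP [H0 _].
        have : p.2 ^+ 2 < 1.
          by have := valP z; rewrite Hfz /= polar_norm.
        by rewrite expr2; nra.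
      rewrite /cellchar ifN; last by rewrite -ltNge.
      by rewrite -/(f p) -Hfz valK.
  + move=> Hq; apply: Hn; case: (boolP (1 <= p.2)) => Hp.
    * by left; apply/(cellK1 p HI Hp).
    * right; move: Hq; rewrite /cellchar ifN //.
      case: insubP => [z _ Hz|Hnz] Hq; first by exists z.
      exfalso; move/negP: Hnz; apply; rewrite polar_norm.
      case: HI => _ /andP [H0 _]; rewrite -ltNge in Hp.
      by rewrite expr2; nra.
Qed.

Lemma openX_compl (A : finType) (Rs : seq (seq (A * bool))) (phi : A -> seq (A * bool)) (R : realType)
  (Q : set (X Rs phi R)) (HQ : binj Q) : openX (~` Q).
Proof. by split => g x; [exact: openX_edge | exact: openX_cell]. Qed.
Local Close Scope ring_scope.
Theorem lemma3p2 (A : finType) (Rs : seq (seq (A * bool)))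
  (phi : A -> seq (A * bool)) (R : realType) (C : set (X Rs phi R)) :
  compactX C ->
  finite_set [set e : G Rs phi * A |
                inA e.1 /\ @Himg A Rs phi R e.1 e.2 `&` C !=set0].
Proof.
move=> HC; set E := [set e : G Rs phi * A | _].
have [//|HEinf] := pselect (finite_set E); exfalso.
pose D := [set y : X Rs phi R | C y /\ exists e : G Rs phi * A, inA e.1 /\ Himg e.1 e.2 y].
pose L := (fun y => base y) @` D.
have HL : ~ finite_set L.
  move=> fL; apply: HEinf.
  apply: (sub_finite_set (B := \bigcup_(g in L)
     [set e : G Rs phi * A | inA e.1 /\ exists2 y : X Rs phi R, Himg e.1 e.2 y & base y = g])).
  - move=> e [HA [y [Hy Cy]]]; exists (base y); first by exists y => //; split => //; exists e.
    by split => //; exists y.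
  - by apply: bigcup_finite fL _ => g _; exact: Eg_finite.
have Hex : forall g : G Rs phi, exists y : X Rs phi R, L g -> C y /\ base y = g.
  move=> g; have [Lg|N] := pselect (L g); last by exists (XV R g).
  by case: Lg => y [Cy _] <-; exists y.
have [pick Hpick] := choice Hex.
pose P := pick @` L.
have PC : P `<=` C by move=> _ [g Lg <-]; exact: (Hpick g Lg).1.
have Pinj : binj P.
  move=> _ _ [g Lg <-] [g' Lg' <-]; by rewrite (Hpick g Lg).2 (Hpick g' Lg').2 => ->.
have Pinf : ~ finite_set P.
  move=> fP; apply: HL; apply: (sub_finite_set (B := (fun y => base y) @` P)); last exact: finite_image.
  by move=> g Lg; exists (pick g); [exists g | exact: (Hpick g Lg).2].
have [p0 Pp0] : exists p, P p.
  apply: contrapT => N; apply: Pinf.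
  have -> : P = set0 by apply/seteqP; split => p // Pp; apply: N; exists p.
  exact: finite_set0.
pose F := [set U : set (X Rs phi R) | exists2 p, P p & U = ~` (P `\ p)].
have Fopen : forall U, F U -> openX U.
  move=> U [p Pp ->]; apply: openX_compl => a b [Pa _] [Pb _]; exact: Pinj.
have Fcov : C `<=` \bigcup_(U in F) U.
  move=> c Cc; have [Pc|nPc] := pselect (P c).
  - exists (~` (P `\ c)); first by exists c.
    by move=> [_ ]; apply.
  - exists (~` (P `\ p0)); first by exists p0.
    by move=> [Pc' _]; exact: nPc Pc'.
have [s [Hs Hcov]] := HC F Fopen Fcov.
have Hfin : forall s' : seq (set (X Rs phi R)), (forall U, List.In U s' -> F U) ->
    finite_set (P `&` [set q | exists U, List.In U s' /\ U q]).
  elim=> [|U s' IH] HF.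
  - apply: (sub_finite_set (B := set0)); last exact: finite_set0.
    by move=> q [_ [U []]].
  - have [p Pp EU] := HF U (List.in_eq U s').
    apply: (sub_finite_set (B := [set p] `|` (P `&` [set q | exists U, List.In U s' /\ U q]))).
    + move=> q [Pq [U' [[<-|HU'] HU'q]]].
      * left; apply: contrapT => Nq; move: HU'q; rewrite EU; apply; split => //.
      * by right; split => //; exists U'.
    + rewrite finite_setU; split; first exact: finite_set1.
      by apply: IH => U' HU'; apply: HF; right.
apply: Pinf; apply: (sub_finite_set _ (Hfin s Hs)).
by move=> q Pq; split => //; apply: Hcov; exact: PC.
Qed.
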